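(* Let $L$ be an $n$-modal logic. If $L$ is $1$-tabular, then $L$ is pretransitive and of finite height, i.e. there are $m,h<\omega$ with $L\vdash \Diamond^{m+1}p\to\Diamond^{\le m}p$ and $L\vdash B_h$.
   Context: Fix $n\ge 1$. $n$-modal formulas are built from variables $p_0,p_1,\dots$ with $\to,\bot$ and unary modalities $\Diamond_i$ ($i<n$); $\Box_i=\neg\Diamond_i\neg$. A logic is a set of $n$-modal formulas containing all classical tautologies, $\Diamond_i(p\vee q)\to\Diamond_ip\vee\Diamond_iq$ and $\neg\Diamond_i\bot$ for all $i<n$, closed under modus ponens, uniform substitution and monotonicity (if $\varphi\to\psi\in L$ then $\Diamond_i\varphi\to\Diamond_i\psi\in L$). A $k$-formula is a formula in the variables $p_j$, $j<k$. $L$ is $k$-tabular if there are only finitely many $k$-formulas up to $L$-provable equivalence. Put $\Diamond^0\varphi=\varphi$, $\Diamond^{i+1}\varphi=\Diamond^i(\Diamond_0\varphi\vee\dots\vee\Diamond_{n-1}\varphi)$, $\Diamond^{\le m}\varphi=\bigvee_{i\le m}\Diamond^i\varphi$, $\Box^{\le m}\varphi=\neg\Diamond^{\le m}\neg\varphi$. $L$ is $m$-transitive if $L\vdash\Diamond^{m+1}p\to\Diamond^{\le m}p$, pretransitive if $m$-transitive for some $m$; then, for the least such $m$, $\Diamond^*:=\Diamond^{\le m}$, $\Box^*:=\Box^{\le m}$. Define $B_0=\bot$, $B_{i+1}=p_{i+1}\to\Box^*(\Diamond^*p_{i+1}\vee B_i)$. A pretransitive logic is of finite height if it contains $B_h$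 for some $h<\omega$. *)

(* Defs.v *)
From mathcomp Require Import all_boot.
Set Implicit Arguments. Unset Strict Implicit. Unset Printing Implicit Defensive.

Inductive form (n : nat) : Type :=
| Var : nat -> form n
| Bot : form n
| Imp : form n -> form n -> form n
| Dia : 'I_n -> form n -> form n.

Arguments Bot {n}.

Section Connectives.
Variable n : nat.
Definition Neg (a : form n) : form n := Imp a Bot.
Definition Top : form n := Neg Bot.
Definition Or (a b : form n) : form n := Imp (Neg a) b.
Definition And (a b : form n) : form n := Neg (Imp a (Neg b)).
Definition Iff (a b : form n) : form n := And (Imp a b) (Imp b a).
Definition Box (i : 'I_n) (a : form n) : form n := Neg (Dia i (Neg a)).

Definition BigOr (s : seq (form n)) : form n := foldr Or Bot s.

Fixpoint teval (v : form n -> bool) (a : form n) : bool :=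
  match a with
  | Var _ => v a
  | Bot => false
  | Imp b c => ~~ teval v b || teval v c
  | Dia _ _ => v a
  end.

(* classical tautology (substitution instance of a propositional tautology) *)
Definition tautology (a : form n) : Prop := forall v, teval v a = true.

Fixpoint subst (s : nat -> form n) (a : form n) : form n :=
  match a with
  | Var j => s j
  | Bot => Bot
  | Imp b c => Imp (subst s b) (subst s c)
  | Dia i b => Dia i (subst s b)
  end.

Definition is_logic (L : form n -> Prop) : Prop :=
  (forall a, tautology a -> L a) /\
  (forall i : 'I_n, L (Imp (Dia i (Or (Var n 0) (Var n 1)))
                          (Or (Dia i (Var n 0)) (Dia i (Var n 1))))) /\
  (forall i : 'I_n, L (Neg (Dia i Bot))) /\
  (forall a b, L (Imp a b) -> L a -> L b) /\
  (forall s a, L a -> L (subst s a)) /\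
  (forall (i : 'I_n) a b, L (Imp a b) -> L (Imp (Dia i a) (Dia i b))).

Fixpoint kform (k : nat) (a : form n) : bool :=
  match a with
  | Var j => j < k
  | Bot => true
  | Imp b c => kform k b && kform k c
  | Dia _ b => kform k b
  end.

Definition ktabular (L : form n -> Prop) (k : nat) : Prop :=
  exists (N : nat) (f : 'I_N -> form n),
    (forall j, kform k (f j)) /\
    (forall a, kform k a -> exists j, L (Iff a (f j))).

Definition Dall (a : form n) : form n := BigOr [seq Dia i a | i <- enum 'I_n].

Fixpoint Dpow (i : nat) (a : form n) : form n :=
  match i with
  | 0 => a
  | i'.+1 => Dpow i' (Dall a)
  end.

Definition Dle (m : nat) (a : form n) : form n :=
  BigOr [seq Dpow i a | i <- iota 0 m.+1].
Definition Ble (m : nat) (a : form n) : form n := Neg (Dle m (Neg a)).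

Definition mtransitive (L : form n -> Prop) (m : nat) : Prop :=
  L (Imp (Dpow m.+1 (Var n 0)) (Dle m (Var n 0))).

(* B_h computed with Diamond^* := Diamond^{<= m} *)
Fixpoint Bform (m : nat) (h : nat) : form n :=
  match h with
  | 0 => Bot
  | i.+1 => Imp (Var n i.+1)
                (Ble m (Or (Dle m (Var n i.+1)) (Bform m i)))
  end.
End Connectives.

(* Main.v *)
Require Import Defs.
From Stdlib Require Import Classical ClassicalEpsilon Lia.
From mathcomp Require Import all_boot.
From mathcomp Require Import zify.
Set Implicit Arguments. Unset Strict Implicit. Unset Printing Implicit Defensive.

Arguments Dle : simpl never.
Arguments Dall : simpl never.
Arguments Dpow : simpl never.
Arguments BigOr : simpl never.

Ltac bcase := repeat match goal with
  | |- context [teval ?v ?x] => case: (teval v x)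
  | |- context [?v (Var ?a ?b)] => case: (v (Var a b))
  | |- context [?v (Dia ?i ?x)] => case: (v (Dia i x))
  end.
Ltac btac := let v := fresh "v" in move=> v /=; bcase => //.

Section Logic.
Variable n : nat.
Variable L : form n -> Prop.
Hypothesis HL : is_logic L.

Lemma Ltaut a : tautology a -> L a. Proof. by have [H _] := HL; apply: H. Qed.
Lemma Lmp a b : L (Imp a b) -> L a -> L b.
Proof. destruct HL as (_&_&_&H&_); apply: H. Qed.
Lemma Lsubst s a : L a -> L (subst s a).
Proof. destruct HL as (_&_&_&_&H&_); apply: H. Qed.
Lemma Lmono i a b : L (Imp a b) -> L (Imp (Dia i a) (Dia i b)).
Proof. destruct HL as (_&_&_&_&_&H); apply: H. Qed.
Lemma Lax_or i : L (Imp (Dia i (Or (Var n 0) (Var n 1))) (Or (Dia i (Var n 0)) (Dia i (Var n 1)))).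
Proof. destruct HL as (_&H&_); apply: H. Qed.
Lemma Lax_bot i : L (Neg (Dia i Bot)).
Proof. destruct HL as (_&_&H&_); apply: H. Qed.

Fixpoint Lall (hs : seq (form n)) : Prop := if hs is h :: t then L h /\ Lall t else True.

Lemma teval_foldr v hs b : teval v (foldr (@Imp n) b hs) = (all (teval v) hs ==> teval v b).
Proof. elim: hs => //= x hs ->. by case: (teval v x). Qed.

Lemma prop_rule hs b : (forall v, all (teval v) hs -> teval v b) -> Lall hs -> L b.
Proof.
move=> H.
have T : L (foldr (@Imp n) b hs).
  apply: Ltaut => v; rewrite teval_foldr; apply/implyP; exact: H.
elim: hs T {H} => //= x hs IH T [Hx Hr]. apply: IH Hr. exact: Lmp T Hx.
Qed.

Ltac prop hs := apply: (@prop_rule hs); [btac | by repeat split].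

Ltac getf H := match type of H with L ?f => f end.
Ltac mklist t := match t with
  | (?r, ?H) => let f := getf H in let l := mklist r in constr:(f :: l)
  | ?H => let f := getf H in constr:([:: f])
  end.
Ltac propw t := let l := mklist t in apply: (@prop_rule l); [btac | by repeat split].

Lemma imp_trans a b c : L (Imp a b) -> L (Imp b c) -> L (Imp a c).
Proof. move=> H1 H2. prop [:: Imp a b; Imp b c]. Qed.

Lemma subst_BigOr (s : nat -> form n) (l : seq (form n)) : subst s (BigOr l) = BigOr (map (subst s) l).
Proof. by rewrite /BigOr; elim: l => //= x l ->. Qed.


Implicit Types (a b c x y : form n) (s : nat -> form n).

Lemma subst_Dall s a : subst s (Dall a) = Dall (subst s a).
Proof. by rewrite /Dall subst_BigOr -map_comp. Qed.

Lemma Dpow0 a : Dpow 0 a = a. Proof. by []. Qed.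
Lemma DpowS i a : Dpow i.+1 a = Dpow i (Dall a). Proof. by []. Qed.

Lemma subst_Dpow s i a : subst s (Dpow i a) = Dpow i (subst s a).
Proof. by elim: i a => //= i IH a; rewrite !DpowS IH subst_Dall. Qed.

Lemma subst_Dle s m a : subst s (Dle m a) = Dle m (subst s a).
Proof.
rewrite /Dle subst_BigOr -map_comp; congr BigOr; apply: eq_map => i /=.
exact: subst_Dpow.
Qed.

Lemma Dpow_Dall i a : Dpow i (Dall a) = Dall (Dpow i a).
Proof. by elim: i a => //= i IH a; rewrite !DpowS IH. Qed.

Lemma Dpow_add i j a : Dpow i (Dpow j a) = Dpow (i + j) a.
Proof.
elim: i j a => //= i IH j a.
by rewrite DpowS -Dpow_Dall -DpowS IH addSnnS.
Qed.

Lemma BigOr_cons x l : BigOr (x :: l) = Or x (BigOr l). Proof. by []. Qed.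

Lemma BigOr_mono (I : Type) (r : seq I) (F G : I -> form n) :
  (forall i, L (Imp (F i) (G i))) -> L (Imp (BigOr (map F r)) (BigOr (map G r))).
Proof.
move=> H; elim: r => [|x r IH] /=.
  apply: Ltaut => v //.
rewrite !BigOr_cons. have := H x => Hx. prop [:: Imp (F x) (G x); Imp (BigOr (map F r)) (BigOr (map G r))].
Qed.

Lemma BigOr_or (I : Type) (r : seq I) (F G H : I -> form n) :
  (forall i, L (Imp (F i) (Or (G i) (H i)))) ->
  L (Imp (BigOr (map F r)) (Or (BigOr (map G r)) (BigOr (map H r)))).
Proof.
move=> K; elim: r => [|x r IH] /=.
  apply: Ltaut => v //.
rewrite !BigOr_cons. have := K x => Kx.
prop [:: Imp (F x) (Or (G x) (H x)); Imp (BigOr (map F r)) (Or (BigOr (map G r)) (BigOr (map H r)))].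
Qed.

Lemma BigOr_neg (I : Type) (r : seq I) (F : I -> form n) :
  (forall i, L (Neg (F i))) -> L (Neg (BigOr (map F r))).
Proof.
move=> K; elim: r => [|x r IH] /=.
  apply: Ltaut => v //.
rewrite !BigOr_cons. have := K x => Kx.
prop [:: Neg (F x); Neg (BigOr (map F r))].
Qed.

Lemma BigOr_all (r : seq nat) (F : nat -> form n) c :
  (forall i, i \in r -> L (Imp (F i) c)) -> L (Imp (BigOr (map F r)) c).
Proof.
elim: r => [|x r IH] K /=.
  apply: Ltaut => v //.
rewrite !BigOr_cons. have Kx := K x (mem_head _ _).
have Kr : L (Imp (BigOr (map F r)) c).
  apply: IH => i ir; apply: K; by rewrite inE ir orbT.
prop [:: Imp (F x) c; Imp (BigOr (map F r)) c].
Qed.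

Lemma BigOr_in (r : seq nat) (F : nat -> form n) k :
  k \in r -> L (Imp (F k) (BigOr (map F r))).
Proof.
elim: r => [|x r IH] //=.
rewrite inE BigOr_cons; case/orP => [/eqP ->|kr].
  apply: Ltaut => v /=; by bcase.
have := IH kr => H. prop [:: Imp (F k) (BigOr (map F r))].
Qed.

Lemma Dall_mono a b : L (Imp a b) -> L (Imp (Dall a) (Dall b)).
Proof. move=> H; apply: BigOr_mono => i; exact: Lmono. Qed.

Lemma Dia_or i a b : L (Imp (Dia i (Or a b)) (Or (Dia i a) (Dia i b))).
Proof.
have := Lsubst (fun j => if j is 0 then a else if j is 1 then b else Var n j) (Lax_or i).
by [].
Qed.

Lemma Dall_or a b : L (Imp (Dall (Or a b)) (Or (Dall a) (Dall b))).
Proof. apply: BigOr_or => i; exact: Dia_or. Qed.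

Lemma Dall_bot : L (Neg (Dall Bot)).
Proof. apply: BigOr_neg => i; exact: Lax_bot. Qed.

Lemma Dpow_mono i a b : L (Imp a b) -> L (Imp (Dpow i a) (Dpow i b)).
Proof. elim: i a b => //= i IH a b H; rewrite !DpowS; apply: IH; exact: Dall_mono. Qed.

Lemma Dpow_or i a b : L (Imp (Dpow i (Or a b)) (Or (Dpow i a) (Dpow i b))).
Proof.
elim: i a b => //= [|i IH] a b.
  apply: Ltaut => v /=; by bcase.
rewrite !DpowS. apply: imp_trans (IH _ _). apply: Dpow_mono; exact: Dall_or.
Qed.

Lemma Dpow_bot i : L (Neg (Dpow i Bot)).
Proof.
elim: i => //= [|i IH]. apply: Ltaut => v //.
rewrite DpowS. have H : L (Imp (Dpow i (Dall Bot)) (Dpow i Bot)).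
  apply: Dpow_mono. have := Dall_bot => K. prop [:: Neg (Dall (@Bot n))].
prop [:: Imp (Dpow i (Dall Bot)) (Dpow i Bot); Neg (Dpow i (@Bot n))].
Qed.

Lemma Dpow_BigOr (I : Type) i (r : seq I) (F : I -> form n) :
  L (Imp (Dpow i (BigOr (map F r))) (BigOr (map (fun z => Dpow i (F z)) r))).
Proof.
elim: r => [|w r IH] /=.
  have := Dpow_bot i => K. prop [:: Neg (Dpow i (@Bot n))].
rewrite !BigOr_cons. have := Dpow_or i (F w) (BigOr (map F r)) => K.
prop [:: Imp (Dpow i (Or (F w) (BigOr (map F r)))) (Or (Dpow i (F w)) (Dpow i (BigOr (map F r))));
        Imp (Dpow i (BigOr (map F r))) (BigOr (map (fun z => Dpow i (F z)) r))].
Qed.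


Section Trans.
Variable m : nat.
Hypothesis HT : mtransitive L m.

Lemma D_mono a b : L (Imp a b) -> L (Imp (Dle m a) (Dle m b)).
Proof. move=> H; apply: BigOr_mono => i; exact: Dpow_mono. Qed.

Lemma D_or a b : L (Imp (Dle m (Or a b)) (Or (Dle m a) (Dle m b))).
Proof. apply: BigOr_or => i; exact: Dpow_or. Qed.

Lemma D_bot : L (Neg (Dle m Bot)).
Proof. apply: BigOr_neg => i; exact: Dpow_bot. Qed.

Lemma Dpow_le k a : L (Imp (Dpow k a) (Dle m a)).
Proof.
have HTa : L (Imp (Dpow m.+1 a) (Dle m a)).
  have X := Lsubst (fun _ => a) (HT : L (Imp (Dpow m.+1 (Var n 0)) (Dle m (Var n 0)))).
  have Y : L (Imp (subst (fun _ => a) (Dpow m.+1 (Var n 0))) (subst (fun _ => a) (Dle m (Var n 0)))) := X.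
  by rewrite subst_Dpow subst_Dle in Y.
elim: k {-2}k (leqnn k) => [|K IH] k Hk.
  apply: (BigOr_in (fun i => Dpow i a)); rewrite mem_iota; lia.
case: (leqP k m) => km.
  apply: (BigOr_in (fun i => Dpow i a)); rewrite mem_iota; lia.
have e : k = (k - m.+1) + m.+1 by lia.
rewrite e -Dpow_add.
apply: imp_trans (Dpow_mono (k - m.+1) HTa) _.
apply: imp_trans (Dpow_BigOr _ _ _) _.
apply: BigOr_all => i; rewrite mem_iota => Hi.
rewrite Dpow_add; apply: IH; lia.
Qed.

Lemma D_T a : L (Imp a (Dle m a)).
Proof. exact: (Dpow_le 0 a). Qed.

Lemma D_4 a : L (Imp (Dle m (Dle m a)) (Dle m a)).
Proof.
change (L (Imp (BigOr (map (fun i => Dpow i (Dle m a)) (iota 0 m.+1))) (Dle m a))).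
apply: BigOr_all => i _.
apply: imp_trans (Dpow_BigOr _ _ _) _.
apply: BigOr_all => j _; rewrite Dpow_add; exact: Dpow_le.
Qed.

Lemma Dneg x : L (Neg x) -> L (Neg (Dle m x)).
Proof.
move=> H; have H2 : L (Imp x Bot) by [].
have := D_mono H2 => H3; have := D_bot => H4.
prop [:: Imp (Dle m x) (Dle m (@Bot n)); Neg (Dle m (@Bot n))].
Qed.

Lemma nec a : L a -> L (Ble m a).
Proof.
move=> H; apply: Dneg. prop [:: a].
Qed.

Lemma KD c x : L (Imp (And (Ble m c) (Dle m x)) (Dle m (And c x))).
Proof.
have H1 : L (Imp x (Or (And c x) (Neg c))) by apply: Ltaut => v /=; bcase.
have := D_mono H1 => H2.
have := D_or (And c x) (Neg c) => H3.
rewrite /Ble.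
prop [:: Imp (Dle m x) (Dle m (Or (And c x) (Neg c)));
         Imp (Dle m (Or (And c x) (Neg c))) (Or (Dle m (And c x)) (Dle m (Neg c)))].
Qed.

Lemma box4 q : L (Imp (Neg (Dle m q)) (Ble m (Neg (Dle m q)))).
Proof.
have H1 : L (Imp (Neg (Neg (Dle m q))) (Dle m q)) by apply: Ltaut => v /=; bcase.
have := D_mono H1 => H2. have := D_4 q => H3. rewrite /Ble.
prop [:: Imp (Dle m (Neg (Neg (Dle m q)))) (Dle m (Dle m q)); Imp (Dle m (Dle m q)) (Dle m q)].
Qed.


Definition lit a k : form n := if odd k then a else Neg a.
Fixpoint G a k : form n :=
  match k with 0 => Neg a | k'.+1 => And (lit a k'.+1) (Dle m (G a k')) end.
Fixpoint sig h : form n :=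
  match h with
  | 0 => Bot
  | h'.+1 => Or (And (Dle m (Var n h)) (if odd h then Neg Bot else Bot))
                (And (Neg (Dle m (Var n h))) (sig h'))
  end.

Lemma loc c a b k : L (Imp c (Iff a b)) -> L (Imp c (Ble m c)) ->
  L (Imp c (Iff (G a k) (G b k))).
Proof.
move=> Hab Hc; elim: k => [|k IH].
  propw Hab.
have K1 := KD c (G a k); have K2 := KD c (G b k).
have M1 : L (Imp (Dle m (And c (G a k))) (Dle m (G b k))).
  apply: D_mono; propw IH.
have M2 : L (Imp (Dle m (And c (G b k))) (Dle m (G a k))).
  apply: D_mono; propw IH.
change (L (Imp c (Iff (And (lit a k.+1) (Dle m (G a k))) (And (lit b k.+1) (Dle m (G b k)))))).
rewrite /lit; case: (odd k.+1); propw (Hab, Hc, K1, K2, M1, M2).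
Qed.

Lemma G_lit a k : L (Imp (G a k) (lit a k)).
Proof. case: k => [|k] /=; apply: Ltaut => v /=; by bcase. Qed.

Lemma lift a bb h0 : (forall j, h0 <= j -> odd j != bb -> L (Neg (G a j))) ->
  forall k, h0 < k -> L (Neg (G a k)).
Proof.
move=> H k hk; case E: (odd k != bb); first exact: H (ltnW hk) E.
move: E hk; case: k => // k E hk.
have ok : odd k != bb by move: E => /=; case: (odd k); case: (bb).
have Hk := H k (ltnSE hk) ok.
have Hd := Dneg Hk.
change (L (Neg (And (lit a k.+1) (Dle m (G a k))))).
propw Hd.
Qed.

Lemma sigA h : L (Imp (Neg (Dle m (Var n h.+1))) (Iff (sig h.+1) (sig h))).
Proof. apply: Ltaut => v /=; do ? (case: ifP => _ /=); by bcase. Qed.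

Lemma sigC h : L (Imp (Dle m (Var n h.+1)) (Iff (sig h.+1) (if odd h.+1 then Neg Bot else Bot))).
Proof. apply: Ltaut => v /=; do ? (case: ifP => _ /=); by bcase. Qed.

Lemma subst_G s a k : subst s (G a k) = G (subst s a) k.
Proof.
elim: k => [|k IH] //.
change (subst s (And (lit a k.+1) (Dle m (G a k))) = And (lit (subst s a) k.+1) (Dle m (G (subst s a) k))).
rewrite -IH -subst_Dle /lit; by case: (odd k.+1).
Qed.

Lemma kform_BigOr k (l : seq (form n)) : all (kform k) l -> kform k (BigOr l).
Proof. rewrite /BigOr; elim: l => //= x l IH /andP [Hx Hl]; rewrite Hx /=; exact: IH. Qed.

Lemma kform_Dall k a : kform k a -> kform k (Dall a).
Proof. move=> H; apply: kform_BigOr; rewrite all_map; by apply/allP. Qed.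

Lemma kform_Dpow k i a : kform k a -> kform k (Dpow i a).
Proof. elim: i a => //= i IH a H; rewrite DpowS; apply: IH; exact: kform_Dall. Qed.

Lemma kform_Dle k a : kform k a -> kform k (Dle m a).
Proof. move=> H; apply: kform_BigOr; rewrite all_map; apply/allP => i _ /=; exact: kform_Dpow. Qed.

Lemma kform_G a k : kform 1 a -> kform 1 (G a k).
Proof.
move=> H; elim: k => [|k IH] /=; first by rewrite H.
have := kform_Dle IH; rewrite /lit; case: (odd k.+1) => /= ->; rewrite ?H //.
Qed.

Lemma up h : forall k, h < k -> L (Neg (G (sig h) k)).
Proof.
elim: h => [|h IH].
  apply: (@lift _ false) => j _ oj.
  have Gl := G_lit (sig 0) j. move: oj Gl; rewrite /lit; case: (odd j) => // _ Gl.

apply: (@lift _ (odd h.+1)) => j hj oj.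
have A := sigA h. have B := box4 (Var n h.+1).
have Lc := loc j A B.
have C := sigC h. have Gl := G_lit (sig h.+1) j.
have IHj := IH j hj.
move: oj C Gl; rewrite /lit; case: (odd j); case: (odd h.+1) => // _ C Gl;
  propw (Lc, C, Gl, IHj).
Qed.

Lemma down h : L (Imp (Neg (Bform n m h)) (G (sig h) h)).
Proof.
elim: h => [|h IH].
  apply: Ltaut => v //.
have T := D_T (Var n h.+1).
have C := sigC h.
have A := sigA h. have B := box4 (Var n h.+1).
have Lc := loc h A B.
have M : L (Imp (Neg (Or (Dle m (Var n h.+1)) (Bform n m h))) (G (sig h.+1) h)).
  propw (Lc, IH).
have DM := D_mono M.
change (L (Imp (Neg (Imp (Var n h.+1) (Ble m (Or (Dle m (Var n h.+1)) (Bform n m h)))))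
  (And (lit (sig h.+1) h.+1) (Dle m (G (sig h.+1) h))))).
move: C; rewrite /lit /Ble; case: (odd h.+1) => C; propw (T, C, DM).
Qed.

End Trans.

Lemma pig (F : nat -> form n) : ktabular L 1 -> (forall k, kform 1 (F k)) ->
  exists i j, i < j /\ L (Iff (F i) (F j)).
Proof.
case=> N [f [_ Hf]] HF.
have g_ex : forall k, {j | L (Iff (F k) (f j))}.
  move=> k; apply: constructive_indefinite_description; exact: Hf.
pose g (x : 'I_N.+1) := sval (g_ex x).
have : ~~ injectiveb g.
  apply/negP => /injectiveP inj. have := @leq_card _ _ g inj. by rewrite !card_ord ltnn.
case/injectivePn => x [y xy gxy].
have Hx : L (Iff (F x) (f (g y))) by rewrite -gxy; exact: svalP (g_ex x).
have Hy : L (Iff (F y) (f (g y))) by exact: svalP (g_ex y).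
case: (ltngtP x y) => [lt|lt|eq].
- exists x, y; split => //; propw (Hx, Hy).
- exists y, x; split => //; propw (Hx, Hy).
- by move: xy; rewrite (val_inj eq) eqxx.
Qed.

End Logic.

Ltac getf2 H := match type of H with _ ?f => f end.
Ltac mklist2 t := match t with
  | (?r, ?H) => let f := getf2 H in let l := mklist2 r in constr:(f :: l)
  | ?H => let f := getf2 H in constr:([:: f])
  end.
Ltac propw2 HL t := let l := mklist2 t in apply: (@prop_rule _ _ HL l); [btac | by repeat split].

Lemma least (P : nat -> Prop) : (exists k, P k) -> exists m, P m /\ forall m', m' < m -> ~ P m'.
Proof.
case=> k Pk. elim: k {-2}k (leqnn k) Pk => [|K IH] k hk Pk.
  exists k; split => // m' lt; lia.
case: (classic (exists m', m' < k /\ P m')) => [[m' [lt Pm']]|N].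
  apply: (IH m') => //; lia.
exists k; split => // m' lt Pm'; apply: N; by exists m'.
Qed.

Theorem mainTheorem1 (n : nat) (hn : 0 < n) (L : form n -> Prop) :
  is_logic L -> ktabular L 1 ->
  exists m : nat,
    mtransitive L m /\ (forall m', m' < m -> ~ mtransitive L m') /\
    exists h : nat, L (Bform n m h).
Proof.
move=> HL Htab.
have [i [j [ij Hij]]] := pig HL (F := fun k => Dle k (Var n 0)) Htab
  (fun k => kform_Dle k (erefl true : kform 1 (Var n 0))).
have Hti : mtransitive L i.
  rewrite /mtransitive.
  have H1 : L (Imp (Dpow i.+1 (Var n 0)) (Dle j (Var n 0))).
    apply: (BigOr_in HL (fun k => Dpow k (Var n 0))); rewrite mem_iota; lia.
  propw2 HL (H1, Hij).
have [m [Hm Hmin]] := least (ex_intro _ i Hti).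
exists m; split => //; split => //.
have [i' [j' [ij' H]]] := pig HL (F := fun k => G m (Var n 0) k) Htab
  (fun k => kform_G m k (erefl true : kform 1 (Var n 0))).
exists i'.
have Hs := Lsubst HL (fun _ => sig n m i') H.
have Hs' : L (Iff (subst (fun _ => sig n m i') (G m (Var n 0) i'))
                  (subst (fun _ => sig n m i') (G m (Var n 0) j'))) := Hs.
rewrite !subst_G /= in Hs'.
have U := up HL Hm ij'. have D := down HL Hm i'.
propw2 HL (Hs', U, D).
Qed.
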